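(* Let $N\ge 1$ be an integer and let $\lambda,\mu,B_1,B_2>0$ with $B_1<B_2$ and $\lambda\mu<B_1+NB_2$. Put $\beta=\frac{B_1}{NB_2}$ (so that $\sqrt{\beta N}=\sqrt{B_1/B_2}$). For $\alpha\in[0,1]$ satisfying the stability constraints $\alpha\lambda<B_1/\mu$ and $(1-\alpha)\lambda/N<B_2/\mu$, define the average system delay of the non-aggregated system $$D(\alpha)=\alpha\,\frac{1}{B_1/\mu-\alpha\lambda}+(1-\alpha)\,\frac{1}{B_2/\mu-(1-\alpha)\lambda/N}.$$ Then the minimum of $D$ over all feasible $\alpha$ is $$D_{\min,\mathrm{non\text{-}agg}}=\begin{cases}\dfrac{\mu N}{B_2N-\lambda\mu}, & \text{if } \dfrac{B_2N}{\lambda\mu}\bigl(1-\sqrt{\beta N}\bigr)\ge 1,\\[3mm] \dfrac{\lambda\mu(1+N)-B_2N\bigl(1-\sqrt{\beta N}\bigr)^2}{\lambda\,[B_2N(\beta+1)-\lambda\mu]}, & \text{otherwise.}\end{cases}$$ In the first case the minimizer is $\alpha_{opt}=0$; in the second case it is $$\alpha_{opt}=\frac{\lambda\mu\sqrt{\beta}/(B_2N)+\sqrt{\beta}\,(\sqrt{\beta N}-1)}{\lambda\mu(\sqrt{\beta}+\sqrt{N})/(B_2N)}.$$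
   Context: Non-aggregated hybrid WiFi–VLC system: one WiFi access point of downlink capacity $B_1$ and $N$ VLC access points each of downlink capacity $B_2$. Requests arrive as a Poisson process of rate $\lambda$; request sizes are i.i.d. exponential with mean $\mu$. Each request is sent, independently at random, entirely to the WiFi queue with probability $\alpha$, or otherwise entirely to one of the $N$ VLC queues chosen uniformly at random. Thus the WiFi queue is an M/M/1 queue with arrival rate $\alpha\lambda$ and service rate $B_1/\mu$, and each VLC queue is an M/M/1 queue with arrival rate $(1-\alpha)\lambda/N$ and service rate $B_2/\mu$; a request's system delay is its stationary sojourn time (arrival until fully served) in the queue it joins, so the average system delay is $D(\alpha)=\alpha D_{WiFi}+(1-\alpha)D_{VLC}$ with $D_{WiFi},D_{VLC}$ the M/M/1 mean sojourn times, which gives the formula in the claim. *)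

(* Defs.v *)
From Stdlib Require Import Reals Lra.
Open Scope R_scope.

Definition D (N : nat) (lam mu B1 B2 alpha : R) : R :=
  alpha * (1 / (B1 / mu - alpha * lam))
  + (1 - alpha) * (1 / (B2 / mu - (1 - alpha) * lam / INR N)).

Definition feasible (N : nat) (lam mu B1 B2 alpha : R) : Prop :=
  0 <= alpha <= 1 /\ alpha * lam < B1 / mu /\ (1 - alpha) * lam / INR N < B2 / mu.

Definition beta (N : nat) (B1 B2 : R) : R := B1 / (INR N * B2).

Definition case1 (N : nat) (lam mu B1 B2 : R) : Prop :=
  (B2 * INR N) / (lam * mu) * (1 - sqrt (beta N B1 B2 * INR N)) >= 1.

Definition Dmin_case1 (N : nat) (lam mu B1 B2 : R) : R :=
  mu * INR N / (B2 * INR N - lam * mu).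

Definition Dmin_case2 (N : nat) (lam mu B1 B2 : R) : R :=
  let b := beta N B1 B2 in
  (lam * mu * (1 + INR N) - B2 * INR N * (1 - sqrt (b * INR N)) ^ 2)
  / (lam * (B2 * INR N * (b + 1) - lam * mu)).

Definition alpha_opt_case2 (N : nat) (lam mu B1 B2 : R) : R :=
  let b := beta N B1 B2 in
  (lam * mu * sqrt b / (B2 * INR N) + sqrt b * (sqrt (b * INR N) - 1))
  / (lam * mu * (sqrt b + sqrt (INR N)) / (B2 * INR N)).

Definition is_min_at (N : nat) (lam mu B1 B2 a m : R) : Prop :=
  feasible N lam mu B1 B2 a /\ D N lam mu B1 B2 a = m /\
  (forall alpha, feasible N lam mu B1 B2 alpha -> m <= D N lam mu B1 B2 alpha).

(* Main.v *)
Require Import Defs.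
From Stdlib Require Import Reals Lra Psatz.
Open Scope R_scope.

Ltac pos := repeat (apply Rmult_lt_0_compat || apply Rmult_le_pos); try lra.

Lemma D_eq N lam mu B1 B2 x : 0 < lam -> 0 < mu -> 0 < INR N ->
  B1 - x*lam*mu <> 0 -> B2 - (1-x)*lam*mu/INR N <> 0 ->
  D N lam mu B1 B2 x =
  (B1/(B1 - x*lam*mu) + INR N * B2/(B2 - (1-x)*lam*mu/INR N) - 1 - INR N)/lam.
Proof.
  intros Hl Hm Hn H1 H2. unfold D.
  replace (B1/mu - x*lam) with ((B1 - x*lam*mu)/mu) by (field; repeat split; intro; nra).
  replace (B2/mu - (1-x)*lam/INR N) with ((B2 - (1-x)*lam*mu/INR N)/mu) by (field; repeat split; intro; nra).
  assert (E : B2 - (1-x)*lam*mu/INR N = (B2*INR N - (1-x)*lam*mu)/INR N) by (field; repeat split; intro; nra).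
  rewrite E in H2.
  assert (B2*INR N - (1-x)*lam*mu <> 0).
  { intro E2. apply H2. rewrite E2. field. lra. }
  field. repeat split; lra.
Qed.

Lemma cs_ineq n p q U V : 0 < n -> 0 < U -> 0 < V ->
  (p+n*q)^2/(U + n*V) <= p*p/U + n*(q*q)/V.
Proof.
  intros Hn HU HV.
  assert (E : (p*p/U + n*(q*q)/V) - (p+n*q)^2/(U + n*V)
              = n*(p*V - q*U)^2/(U*V*(U+n*V))) by (field; repeat split; intro; nra).
  assert (0 <= n*(p*V - q*U)^2/(U*V*(U+n*V))).
  { apply Rmult_le_pos. apply Rmult_le_pos; [lra| apply pow2_ge_0].
    apply Rlt_le, Rinv_0_lt_compat. apply Rmult_lt_0_compat; nra. }
  lra.
Qed.

Lemma tangent_ineq n p q U V V0 : 0 < n -> 0 < p -> 0 < q -> 0 < U -> 0 < V -> 0 < V0 ->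
  U = p*p + n*(V0 - V) -> V0 <= V -> p*q <= V0 ->
  1 + n*(q*q)/V0 <= p*p/U + n*(q*q)/V.
Proof.
  intros Hn Hp Hq HU HV HV0 EU HVV Hpq.
  assert (A1 : 2 - U/(p*p) <= p*p/U).
  { assert (p*p/U + U/(p*p) - 2 = (U - p*p)^2/(U*(p*p))) by (field; repeat split; intro; nra).
    assert (0 <= (U - p*p)^2/(U*(p*p))).
    { apply Rmult_le_pos. apply pow2_ge_0. apply Rlt_le, Rinv_0_lt_compat; pos. }
    lra. }
  assert (A2 : 2*n*(q*q)/V0 - n*(q*q)*V/(V0*V0) <= n*(q*q)/V).
  { assert (n*(q*q)/V - (2*n*(q*q)/V0 - n*(q*q)*V/(V0*V0)) = n*(q*q)*(V-V0)^2/(V*(V0*V0)))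
      by (field; repeat split; intro; nra).
    assert (0 <= n*(q*q)*(V-V0)^2/(V*(V0*V0))).
    { apply Rmult_le_pos. apply Rmult_le_pos. pos. apply pow2_ge_0.
      apply Rlt_le, Rinv_0_lt_compat; pos. }
    lra. }
  assert (A3 : 0 <= (V - V0)*n*(1/(p*p) - q*q/(V0*V0))).
  { apply Rmult_le_pos. pos.
    assert (q*q/(V0*V0) <= 1/(p*p)).
    { apply (Rmult_le_reg_r ((p*p)*(V0*V0))). pos.
      replace (q*q/(V0*V0)*(p*p*(V0*V0))) with ((p*q)*(p*q)) by (field; repeat split; intro; nra).
      replace (1/(p*p)*(p*p*(V0*V0))) with (V0*V0) by (field; repeat split; intro; nra).
      assert (0 < p*q) by pos. apply Rmult_le_compat; lra. }
    lra. }
  assert (E : 2 - U/(p*p) + (2*n*(q*q)/V0 - n*(q*q)*V/(V0*V0)) - (1 + n*(q*q)/V0)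
             = (V - V0)*n*(1/(p*p) - q*q/(V0*V0))) by (rewrite EU; field; lra).
  lra.
Qed.

Lemma divpos a b : 0 < a -> 0 < b -> 0 < a / b.
Proof. intros. apply Rdiv_lt_0_compat; lra. Qed.

Lemma divnn a b : 0 <= a -> 0 < b -> 0 <= a / b.
Proof. intros. apply Rmult_le_pos; [lra|]. apply Rlt_le, Rinv_0_lt_compat; lra. Qed.

Lemma feas_UV N lam mu p q x : 0 < mu -> 0 < INR N ->
  feasible N lam mu (p*p) (q*q) x ->
  0 < p*p - x*lam*mu /\ 0 < q*q - (1-x)*lam*mu/INR N.
Proof.
  intros Hm Hn [H01 [H1 H2]]. split.
  - apply (Rmult_lt_compat_r mu) in H1; [|lra].
    replace (p*p/mu*mu) with (p*p) in H1 by (field; lra). lra.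
  - apply (Rmult_lt_compat_r mu) in H2; [|lra].
    replace (q*q/mu*mu) with (q*q) in H2 by (field; lra).
    replace ((1-x)*lam*mu/INR N) with ((1-x)*lam/INR N*mu) by (field; lra). lra.
Qed.

Theorem theorem1 (N : nat) (lam mu B1 B2 : R)
  (HN : (1 <= N)%nat) (Hlam : 0 < lam) (Hmu : 0 < mu) (HB1 : 0 < B1) (HB2 : 0 < B2)
  (HB12 : B1 < B2) (Hload : lam * mu < B1 + INR N * B2) :
  (case1 N lam mu B1 B2 ->
     is_min_at N lam mu B1 B2 0 (Dmin_case1 N lam mu B1 B2)) /\
  (~ case1 N lam mu B1 B2 ->
     is_min_at N lam mu B1 B2 (alpha_opt_case2 N lam mu B1 B2) (Dmin_case2 N lam mu B1 B2)).
Proof.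
  assert (Hn : 1 <= INR N) by (apply (le_INR 1); auto).
  assert (Hp : sqrt B1 * sqrt B1 = B1) by (apply sqrt_sqrt; lra).
  assert (Hq : sqrt B2 * sqrt B2 = B2) by (apply sqrt_sqrt; lra).
  assert (Hr : sqrt (INR N) * sqrt (INR N) = INR N) by (apply sqrt_sqrt; lra).
  assert (Hp0 : 0 < sqrt B1) by (apply sqrt_lt_R0; lra).
  assert (Hq0 : 0 < sqrt B2) by (apply sqrt_lt_R0; lra).
  assert (Hr0 : 0 < sqrt (INR N)) by (apply sqrt_lt_R0; lra).
  remember (sqrt B1) as p. remember (sqrt B2) as q. remember (sqrt (INR N)) as r.
  unfold case1, Dmin_case1, Dmin_case2, alpha_opt_case2, beta, is_min_at.
  rewrite <- Heqr.
  rewrite <- Hp, <- Hq in *.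
  clear Heqp Heqq HB1 HB2.
  set (n := INR N) in *.
  assert (Hpq : p < q) by nra.
  assert (S1 : sqrt (p*p/(n*(q*q))*n) = p/q).
  { apply sqrt_lem_1. apply Rlt_le. apply Rmult_lt_0_compat; [apply divpos|]; pos.
    apply Rlt_le, divpos; lra. field. split; lra. }
  assert (S2 : sqrt (p*p/(n*(q*q))) = p/(r*q)).
  { apply sqrt_lem_1. apply Rlt_le, divpos; pos.
    apply Rlt_le, divpos; pos. rewrite <- Hr. field. split; lra. }
  rewrite S1, S2.
  assert (HK : q*q*n/(lam*mu)*(1 - p/q) = n*q*(q-p)/(lam*mu)) by (field; split; nra).
  rewrite HK.
  split.
  -
    intro Hc.
    assert (Hc1 : lam*mu <= n*q*(q-p)).
    { apply Rge_le in Hc. apply (Rmult_le_compat_r (lam*mu)) in Hc; [|pos].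
      replace (n*q*(q-p)/(lam*mu)*(lam*mu)) with (n*q*(q-p)) in Hc by (field; split; lra). lra. }
    set (V0 := q*q - lam*mu/n).
    assert (HV0 : p*q <= V0).
    { unfold V0. replace (q*q - lam*mu/n) with (p*q + (n*q*(q-p) - lam*mu)/n) by (field; lra).
      assert (0 <= (n*q*(q-p) - lam*mu)/n) by (apply divnn; lra). nra. }
    assert (HV0p : 0 < V0) by nra.
    split; [|split].
    + unfold feasible. fold n. split; [lra|split].
      * replace (0*lam) with 0 by ring. apply divpos; pos.
      * replace ((1-0)*lam/n) with (q*q/mu - V0/mu) by (unfold V0; field; split; lra).
        assert (0 < V0/mu) by (apply divpos; [exact HV0p|exact Hmu]). lra.
    + unfold D. fold n. unfold V0 in HV0p. field.
      assert (E : q*q*n - lam*mu = V0*n) by (unfold V0; field; lra).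
      rewrite E. repeat split; try lra; try (intro; nra).
      all: apply Rgt_not_eq; apply Rmult_lt_0_compat; [exact HV0p|lra].
    + intros x Hx.
      destruct (feas_UV N lam mu p q x Hmu ltac:(fold n; lra) Hx) as [HU HV].
      fold n in HU, HV.
      rewrite D_eq; fold n; try lra.
      assert (T := tangent_ineq n p q (p*p - x*lam*mu) (q*q - (1-x)*lam*mu/n) V0
         ltac:(lra) Hp0 Hq0 HU HV HV0p).
      destruct Hx as [H01 _].
      assert (0 <= x*lam*mu/n) by (apply divnn; pos).
      specialize (T ltac:(unfold V0; field; lra) ltac:(unfold V0; assert (x*lam*mu/n = lam*mu/n - (1-x)*lam*mu/n) by (field; lra); lra) HV0).
      assert (E : mu*n/(q*q*n - lam*mu) = (1 + n*(q*q)/V0 - 1 - n)/lam).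
      { unfold V0 in *. field. repeat split; try lra.
        assert (E2 : q*q*n - lam*mu = (q*q - lam*mu/n)*n) by (field; lra).
        rewrite E2. apply Rgt_not_eq, Rmult_lt_0_compat; lra. }
      rewrite E. apply Rmult_le_compat_r; [apply Rlt_le, Rinv_0_lt_compat; lra|]. lra.
  - intro Hc.
    assert (Hc2 : n*q*(q-p) < lam*mu).
    { destruct (Rlt_le_dec (n*q*(q-p)) (lam*mu)) as [h|h]; [exact h|].
      exfalso. apply Hc. apply Rle_ge.
      apply (Rmult_le_reg_r (lam*mu)); [pos|].
      replace (n*q*(q-p)/(lam*mu)*(lam*mu)) with (n*q*(q-p)) by (field; split; lra). lra. }
    assert (Hnqq : n*q*(q-p) = n*q*q - n*p*q) by ring.
    set (S := p*p + n*(q*q) - lam*mu).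
    assert (HS : 0 < S) by (unfold S; lra).
    set (xs := p*(lam*mu + n*p*q - n*q*q)/(lam*mu*(p+n*q))).
    assert (Hpnq : 0 < p + n*q) by (assert (0 < n*q) by pos; lra).
    assert (Ea : (lam*mu*(p/(r*q))/(q*q*n) + p/(r*q)*(p/q - 1)) /
                 (lam*mu*(p/(r*q)+r)/(q*q*n)) = xs).
    { unfold xs. rewrite <- Hr. field. repeat split; try lra.
      all: rewrite Hr; lra. }
    rewrite Ea.
    assert (EU : p*p - xs*lam*mu = p*S/(p+n*q)).
    { unfold xs, S. field. repeat split; try lra. }
    assert (EV : q*q - (1-xs)*lam*mu/n = q*S/(p+n*q)).
    { unfold xs, S. field. repeat split; try lra. }
    assert (HU : 0 < p*p - xs*lam*mu) by (rewrite EU; apply divpos; pos).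
    assert (HV : 0 < q*q - (1-xs)*lam*mu/n) by (rewrite EV; apply divpos; pos).
    assert (EDm : (lam*mu*(1+n) - q*q*n*(1-p/q)^2)/(lam*(q*q*n*(p*p/(n*(q*q))+1) - lam*mu))
                  = ((p+n*q)^2/S - 1 - n)/lam).
    { unfold S. field. repeat split; try lra. }
    rewrite EDm.
    split; [|split].
    + unfold feasible. fold n. split; [split|split].
      * unfold xs. apply divnn; [|pos]. apply Rmult_le_pos; lra.
      * assert (E1 : 1 - xs = n*q*(lam*mu - p*p + p*q)/(lam*mu*(p+n*q))).
        { unfold xs. field. repeat split; try lra. }
        assert (0 <= n*q*(lam*mu - p*p + p*q)/(lam*mu*(p+n*q))).
        { apply divnn; [|pos]. apply Rmult_le_pos; [pos|nra]. }
        lra.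
      * assert (E1 : p*p/mu - xs*lam = (p*p - xs*lam*mu)/mu) by (field; lra).
        assert (0 < (p*p - xs*lam*mu)/mu) by (apply divpos; lra). lra.
      * assert (E1 : q*q/mu - (1-xs)*lam/n = (q*q - (1-xs)*lam*mu/n)/mu) by (field; lra).
        assert (0 < (q*q - (1-xs)*lam*mu/n)/mu) by (apply divpos; lra). lra.
    + rewrite D_eq; fold n; try lra. rewrite EU, EV.
      field. repeat split; try lra.
    + intros x Hx.
      destruct (feas_UV N lam mu p q x Hmu ltac:(fold n; lra) Hx) as [HU' HV'].
      fold n in HU', HV'.
      rewrite D_eq; fold n; try lra.
      assert (T := cs_ineq n p q (p*p - x*lam*mu) (q*q - (1-x)*lam*mu/n) ltac:(lra) HU' HV').
      replace (p*p - x*lam*mu + n*(q*q - (1-x)*lam*mu/n)) with S in T by (unfold S; field; lra).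
      apply Rmult_le_compat_r; [apply Rlt_le, Rinv_0_lt_compat; lra|]. lra.
Qed.
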